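(* Let $r\ge1$ and let $\ell\ge 2^r+1$ (with $\ell$ odd). There exists $m_0=m_0(r,\ell)$ such that for every $m\ge m_0$ the graph $H_{m,r}$ is $(C_\ell,r)$-Ramsey.
   Context: $H_{m,r}$ is the graph on pairwise disjoint vertex sets $V_1,\dots,V_{2^r+1}$, each of size $m$, whose edges are: a perfect matching between $V_{2i-1}$ and $V_{2i}$ for each $1\le i\le 2^{r-1}$, and all possible edges between $V_i$ and $V_j$ for every other pair $\{i,j\}$ of distinct indices (no edges inside any $V_i$). A graph $G$ is $(H,r)$-Ramsey if every colouring of its edges with $r$ colours contains a monochromatic copy of $H$. $C_\ell$ is the cycle of length $\ell$. *)

(* Defs.v *)
From mathcomp Require Import all_boot all_order.
Set Implicit Arguments. Unset Strict Implicit. Unset Printing Implicit Defensive.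

(* A simple graph on a finite type is given by an adjacency relation,
   assumed symmetric and irreflexive where needed (H_{m,r} below is). *)

(* Vertices of H_{m,r}: pairs (i, a) meaning vertex a of part V_{i+1},
   i < 2^r + 1, a < m (0-indexed parts). *)
Definition Hvert (m r : nat) : finType := ('I_(2 ^ r).+1 * 'I_m)%type.

(* Parts i, j (0-indexed) are matched iff they are V_{2k-1}, V_{2k}
   (1-indexed) for some 1 <= k <= 2^(r-1), i.e. i = 2k', j = 2k'+1
   (or vice versa) with k' < 2^(r-1), i.e. i/2 = j/2 and both < 2^r. *)
Definition matched_parts (r i j : nat) : bool :=
  [&& i != j, i./2 == j./2, i < 2 ^ r & j < 2 ^ r].

(* Edge relation of H_{m,r}; the perfect matching between matched parts
   is taken to be the identity matching a <-> a (any choice gives an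
   isomorphic graph). *)
Definition Hadj (m r : nat) : rel (Hvert m r) :=
  fun x y =>
    (x.1 != y.1) &&
    (if matched_parts r x.1 y.1 then x.2 == y.2 else true).

Definition cycle_Ramsey (T : finType) (G : rel T) (l r : nat) : Prop :=
  forall c : T -> T -> 'I_r,
    (forall x y, G x y -> c x y = c y x) ->
    exists k : 'I_r, exists v : 'I_l -> T,
      injective v /\
      forall i : 'I_l,
        G (v i) (v (ordS i)) /\ c (v i) (v (ordS i)) = k.

(* Main.v *)
Require Import Defs.
From mathcomp Require Import all_boot all_order zify.
Set Implicit Arguments. Unset Strict Implicit. Unset Printing Implicit Defensive.

Lemma pigeon (T C : finType) (B : {set T}) (g : T -> C) (k0 : C) :
  exists k, #|B| <= #|C| * #|[set x in B | g x == k]|.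
Proof.
pose F k := #|[set x in B | g x == k]|.
have [k _ Hk] := @arg_maxnP C k0 xpredT F isT.
exists k.
have -> : #|B| = \sum_(j : C) F j.
  rewrite -sum1_card (partition_big g xpredT) //=.
  apply: eq_bigr => j _; rewrite sum1dep_card /F.
  by apply: eq_card => x; rewrite !inE.
rewrite -sum_nat_const; apply: leq_sum => j _; exact: Hk.
Qed.

Definition bipM (c N : nat) := N + N * c + N * c ^ (N * c).

Lemma bip (T C : finType) (N : nat) (chi : T -> T -> C) (A B : {set T}) :
  bipM #|C| N <= #|A| -> bipM #|C| N <= #|B| ->
  exists A' B' : {set T}, [/\ A' \subset A, B' \subset B, N <= #|A'|, N <= #|B'| &
    forall a a' b b', a \in A' -> a' \in A' -> b \in B' -> b' \in B' -> chi a b = chi a' b'].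
Proof.
rewrite /bipM => HA HB.
case: N HA HB => [|N] HA HB.
  by exists set0, set0; split => //; rewrite ?sub0set // => a a' b b'; rewrite inE.
set K := N.+1 * #|C|.
have [a1 a1A] : exists a1, a1 \in A.
  by apply/card_gt0P; apply: leq_trans HA; lia.
have c0 : 0 < #|C| by apply/card_gt0P; exists (chi a1 a1).
have : K <= #|A| by apply: leq_trans HA; lia.
case/card_geqP => s [us ss sA].
pose g b : {ffun 'I_K -> C} := [ffun i : 'I_K => chi (nth a1 s i) b].
have [F HF] := pigeon B g [ffun=> chi a1 a1].
rewrite card_ffun card_ord in HF.
set B1 := [set x in B | g x == F] in HF.
have HB1 : N.+1 <= #|B1|.
  have hp : 0 < #|C| ^ K by rewrite expn_gt0 c0.
  rewrite -(leq_pmul2l hp); apply: leq_trans _ HF; apply: leq_trans _ HB; rewrite mulnC; exact: leq_addl.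
have [b0 b0B1] : exists b0, b0 \in B1 by apply/card_gt0P; apply: leq_trans HB1.
have [k Hk] := pigeon [set x in s] (fun a => chi a b0) (chi a1 a1).
set A1 := [set x in [set x in s] | chi x b0 == k] in Hk.
have HA1 : N.+1 <= #|A1|.
  rewrite -(leq_pmul2l c0); apply: leq_trans _ Hk.
  rewrite cardsE; move/card_uniqP: us => ->; by rewrite ss /K mulnC.
have key : forall a b, a \in A1 -> b \in B1 -> chi a b = k.
  move=> a b; rewrite !inE => /andP [ais /eqP <-] /andP [_ /eqP gb].
  move: b0B1; rewrite inE => /andP [_ /eqP gb0].
  have hi : index a s < K by rewrite -ss index_mem.
  have := congr1 (fun f : {ffun 'I_K -> C} => f (Ordinal hi)) (etrans gb (esym gb0)).
  by rewrite /g !ffunE /= nth_index.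
exists A1, B1; split => //.
- by apply/subsetP => x; rewrite !inE => /andP [/sA]. 
- by apply/subsetP => x; rewrite !inE => /andP [].
- by move=> a a' b b' ha ha' hb hb'; rewrite !key.
Qed.

Lemma prodR (I C : finType) (ps : seq (I * I)) (N : nat) : exists M, N <= M /\
  forall (T : finType) (chi : I -> I -> T -> T -> C) (S0 : I -> {set T}),
  (forall s, M <= #|S0 s|) -> exists S : I -> {set T},
  [/\ (forall s, S s \subset S0 s), (forall s, N <= #|S s|) &
    forall p, p \in ps -> p.1 != p.2 -> forall a a' b b', a \in S p.1 -> a' \in S p.1 ->
      b \in S p.2 -> b' \in S p.2 -> chi p.1 p.2 a b = chi p.1 p.2 a' b'].
Proof.
elim: ps N => [|[s s'] ps IH] N.
  exists N; split => // T chi S0 HS; exists S0; split => //.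
have [M1 [NM1 HM1]] := IH N.
exists (bipM #|C| M1); split; first by apply: leq_trans NM1 _; rewrite /bipM; lia.
move=> T chi S0 HS.
case: (eqVneq s s') => [<-|nss].
  have [S [S1 S2 S3]] := HM1 T chi S0 (fun x => leq_trans (leq_trans (leq_addr _ _) (leq_addr _ _)) (HS x)).
  exists S; split => // p; rewrite inE => /orP [/eqP -> /=|]; first by rewrite eqxx.
  exact: S3.
have [A' [B' [sA sB HA HB Hm]]] := bip (chi s s') (HS s) (HS s').
pose S1 x := if x == s then A' else if x == s' then B' else S0 x.
have HS1 : forall x, M1 <= #|S1 x|.
  move=> x; rewrite /S1; case: eqP => // _; case: eqP => // _.
  exact: leq_trans (leq_trans (leq_addr _ _) (leq_addr _ _)) (HS x).
have [S [S1s S2 S3]] := HM1 T chi S1 HS1.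
exists S; split => //.
- move=> x; apply: subset_trans (S1s x) _; rewrite /S1.
  case: eqP => [->|_] //; case: eqP => [->|_] //.
- move=> p; rewrite inE => /orP [/eqP -> /= _|]; last exact: S3.
  move=> a a' b b' ha ha' hb hb'; apply: Hm.
  + by have := S1s s; rewrite /S1 eqxx => /subsetP; apply.
  + by have := S1s s; rewrite /S1 eqxx => /subsetP; apply.
  + by have := S1s s'; rewrite /S1 eqxx eq_sym (negbTE nss) => /subsetP; apply.
  + by have := S1s s'; rewrite /S1 eqxx eq_sym (negbTE nss) => /subsetP; apply.
Qed.

Definition cyc (V : Type) (G : rel V) (t : nat) (w : nat -> V) :=
  [/\ odd t, w t = w 0 & forall i, i < t -> G (w i) (w i.+1)].

Lemma shorten (V : eqType) (G : rel V) t w : cyc G t w ->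
  exists t' w', [/\ cyc G t' w', t' <= t &
    forall i j, i < t' -> j < t' -> w' i = w' j -> i = j].
Proof.
elim/ltn_ind: t w => t IH w [Ho Hc He].
case: (boolP [exists i : 'I_t, exists j : 'I_t, (i < j) && (w i == w j)]).
  case/existsP => [[i hi]] /existsP [[j hj]] /= /andP [ij /eqP wij].
  case: (boolP (odd (j - i))) => oji.
    have Hlt : j - i < t by lia.
    have Hc1 : cyc G (j - i) (fun k => w (i + k)).
      rewrite /cyc; split => //; first by rewrite subnKC ?wij ?addn0 // ltnW.
      by move=> k hk; rewrite addnS; apply: He; lia.
    have [t' [w' [H1 H2 H3]]] := IH _ Hlt _ Hc1.
    exists t', w'; split => //; lia.
  pose w2 k := if k <= i then w k else w (k + (j - i)).
  have Hlt : t - (j - i) < t by lia.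
  have Hc2 : cyc G (t - (j - i)) w2.
    rewrite /cyc; split.
    - by rewrite oddB ?Ho ?(negbTE oji) //; lia.
    - rewrite /w2 leq0n ifN; last lia.
      by rewrite subnK ?Hc //; lia.
    - move=> k hk; rewrite /w2.
      case: (ltngtP k i) => hki.
      + apply: He; lia.
      + rewrite addSn; apply: He; lia.
      + rewrite hki.
        have -> : i.+1 + (j - i) = j.+1 by lia.
        by rewrite wij; apply: He.
  have [t' [w' [H1 H2 H3]]] := IH _ Hlt _ Hc2.
  exists t', w'; split => //; lia.
rewrite negb_exists => /forallP Hn.
exists t, w; split => // i j hi hj wij.
case: (ltngtP i j) => // hij.
  by move: (Hn (Ordinal hi)); rewrite negb_exists => /forallP /(_ (Ordinal hj)); rewrite /= hij wij eqxx.
by move: (Hn (Ordinal hj)); rewrite negb_exists => /forallP /(_ (Ordinal hi)); rewrite /= hij wij eqxx.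
Qed.

Definition dcov (V : Type) (G : rel V) : rel (V * bool) :=
  fun a b => G a.1 b.1 && (b.2 == ~~ a.2).

Definition phi (V : finType) (G : rel V) (x : V) : bool :=
  connect (dcov G) (root G x, false) (x, true).

Lemma lift_path (V : finType) (G : rel V) p a b :
  path G a p -> connect (dcov G) (a, b) (last a p, b (+) odd (size p)).
Proof.
elim: p a b => [|y p IH] a b /=; first by rewrite addbF connect0.
case/andP => Gay Hp.
have -> : b (+) ~~ odd (size p) = ~~ b (+) odd (size p) by case: b; case: odd.
apply: connect_trans (IH y (~~ b) Hp).
by apply: connect1; rewrite /dcov /= Gay eqxx.
Qed.

Lemma dcov_parity (V : Type) (G : rel V) p a :
  path (dcov G) a p -> (last a p).2 = a.2 (+) odd (size p).
Proof.
elim: p a => [|y p IH] a /=; first by rewrite addbF.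
case/andP => /andP [_ /eqP hy] Hp.
by rewrite (IH y Hp) hy addbN addNb.
Qed.

Lemma odd_walk (V : finType) (G : rel V) x :
  connect (dcov G) (x, false) (x, true) -> exists t w, cyc G t w.
Proof.
case/connectP => p Hp Hl.
have Hpar := dcov_parity Hp; rewrite -Hl /= in Hpar.
exists (size p), (fun i => (nth (x, false) ((x, false) :: p) i).1); split.
- by rewrite -Hpar.
- by rewrite /= -last_nth -Hl.
- move=> i hi; move/(pathP (x, false)): Hp => /(_ i hi) /andP [H _].
  by rewrite /=.
Qed.

Lemma bipart (V : finType) (G : rel V) : symmetric G ->
  (forall x, ~~ connect (dcov G) (x, false) (x, true)) ->
  forall x y, G x y -> phi G x != phi G y.
Proof.
move=> sG nodd x y Gxy.
have sD : connect_sym (dcov G).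
  apply: sym_connect_sym => a b; rewrite /dcov sG; congr (_ && _).
  by case: a.2; case: b.2.
have sGc : connect_sym G by apply: sym_connect_sym.
have rxy : root G x = root G y by apply/(rootP sGc)/connect1.
set rho := root G x.
have Crx : connect G rho x by rewrite sGc connect_root.
have Cry : connect G rho y by rewrite sGc /rho rxy connect_root.
have Dxy : forall b, dcov G (x, b) (y, ~~ b) by move=> b; rewrite /dcov /= Gxy eqxx.
have Dyx : forall b, dcov G (y, b) (x, ~~ b) by move=> b; rewrite /dcov /= sG Gxy eqxx.
rewrite /phi -rxy -/rho.
case Hx: (connect _ _ (x, true)); case Hy: (connect _ _ (y, true)) => //.
- have H1 : connect (dcov G) (rho, false) (x, false).
    by apply: connect_trans Hy (connect1 (Dyx true)).
  have := nodd x; rewrite (connect_trans _ Hx) //.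
  by rewrite sD.
- have [p Hp Hl] := connectP Crx.
  have := lift_path false Hp; rewrite -Hl addFb.
  case: (odd (size p)); first by rewrite Hx.
  move=> H; have := connect_trans H (connect1 (Dxy false)).
  by rewrite Hy.
Qed.

Lemma kp_cycle (V : finType) (r : nat) (G : 'I_r -> rel V) :
  (forall k, symmetric (G k)) -> (forall k x, ~~ G k x x) ->
  (forall x y, x != y -> exists k, G k x y) -> 2 ^ r < #|V| ->
  exists k t w, [/\ cyc (G k) t w, 3 <= t &
    forall i j, i < t -> j < t -> w i = w j -> i = j].
Proof.
move=> sG irr cov big.
case: (boolP [exists k, exists x, connect (dcov (G k)) (x, false) (x, true)]).
  case/existsP => k /existsP [x Hx].
  have [t [w Hc]] := odd_walk Hx.
  have [t' [w' [[H1 H2 H3] _ H4]]] := shorten Hc.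
  exists k, t', w'; split => //.
  case: t' H1 H2 H3 {H4} => [|[|[|t']]] //= _ H2 H3.
  by have := H3 0 isT; rewrite H2 (negbTE (irr _ _)).
rewrite negb_exists => /forallP Hn.
have nodd : forall k x, ~~ connect (dcov (G k)) (x, false) (x, true).
  by move=> k x; move: (Hn k); rewrite negb_exists => /forallP; apply.
pose Phi x : {ffun 'I_r -> bool} := [ffun k => phi (G k) x].
have inj : injective Phi.
  move=> x y hxy; apply/eqP; apply/negPn/negP => nxy.
  have [k Gk] := cov x y nxy.
  have := bipart (sG k) (nodd k) Gk.
  by rewrite -(ffunE (fun k => phi (G k) x)) -(ffunE (fun k => phi (G k) y)) -/(Phi x) -/(Phi y) hxy eqxx.
have := leq_card Phi inj; rewrite card_ffun card_bool card_ord.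
by rewrite leqNgt big.
Qed.

Lemma rot_cyc (V : Type) (G : rel V) t w s :
  cyc G t w -> (forall i j, i < t -> j < t -> w i = w j -> i = j) ->
  cyc G t (fun i => w ((i + s) %% t)) /\
  (forall i j, i < t -> j < t -> w ((i + s) %% t) = w ((j + s) %% t) -> i = j).
Proof.
move=> [Ho Hc He] Hi.
have t0 : 0 < t by case: t Ho {Hc He Hi}.
split; first split => //.
- by rewrite modnDl.
- move=> i hi.
  have ha : (i + s) %% t < t by rewrite ltn_mod.
  have -> : (i.+1 + s) %% t = ((i + s) %% t).+1 %% t.
    by rewrite -[((i + s) %% t).+1]addn1 modnDml; congr (_ %% _); lia.
  have := He _ ha.
  case: (ltngtP ((i + s) %% t).+1 t) => h.
  + by rewrite (modn_small h).
  + lia.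
  + by rewrite h modnn Hc.
- move=> i j hi hj /Hi H.
  have := H; rewrite !ltn_mod t0 => /(_ isT isT) /eqP.
  by rewrite eqn_modDr !modn_small // => /eqP.
Qed.
Unset Implicit Arguments.

Theorem lemma3p6 (r l : nat) :
  1 <= r -> (2 ^ r).+1 <= l -> odd l ->
  exists m0 : nat, forall m : nat, m0 <= m ->
    cycle_Ramsey (@Hadj m r) l r.
Proof.
move=> r1 Pl ol.
have [M [lM HM]] := @prodR 'I_(2 ^ r).+1 {ffun 'I_(2 ^ r).+1 * 'I_(2 ^ r).+1 -> 'I_r}
  (enum [set: 'I_(2 ^ r).+1 * 'I_(2 ^ r).+1]) l.
exists M => m Mm c csym.
pose chi (s s' : 'I_(2 ^ r).+1) (a b : 'I_m) : {ffun 'I_(2 ^ r).+1 * 'I_(2 ^ r).+1 -> 'I_r} :=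
  [ffun ij => c (ij.1, a) (ij.2, b)].
have HS0 : forall s : 'I_(2 ^ r).+1, M <= #|(fun _ => [set: 'I_m]) s|.
  by move=> _; rewrite cardsT card_ord.
have [S [_ Ssz Smono]] := HM _ chi _ HS0.
pose sg (i : 'I_(2 ^ r).+1) : 'I_(2 ^ r).+1 := inord (i./2).
have sgE : forall i : 'I_(2 ^ r).+1, (sg i : nat) = i./2.
  move=> i; rewrite /sg inordK //; apply: leq_ltn_trans (ltn_ord i).
  by rewrite -{2}(odd_double_half i) -addnn addnA leq_addl.
have [a0 _] : exists a0 : 'I_m, a0 \in S ord0.
  by apply/card_gt0P; apply: leq_trans (Ssz _); lia.
pose f s := odflt a0 [pick x in S s].
have fS : forall s, f s \in S s.
  move=> s; rewrite /f; case: pickP => [x /= -> //|H].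
  have : 0 < #|S s| by apply: leq_trans (Ssz _); lia.
  by move/card_gt0P => [x]; rewrite [x \in _]H.
pose u (i : 'I_(2 ^ r).+1) : Hvert m r := (i, f (sg i)).
have canon : forall y z (a b : 'I_m), sg y != sg z -> a \in S (sg y) -> b \in S (sg z) ->
    c (y, a) (z, b) = c (u y) (u z).
  move=> y z a b ne ha hb.
  have := Smono (sg y, sg z); rewrite mem_enum inE => /(_ isT ne a (f (sg y)) b (f (sg z)) ha (fS _) hb (fS _)).
  move/(congr1 (fun F : {ffun _ -> _} => F (y, z))).
  by rewrite /chi !ffunE.
have hadj_u : forall i j, i != j -> Hadj (u i) (u j).
  move=> i j ne; rewrite /Hadj /= ne /=.
  case: ifP => // /and4P [_ /eqP h _ _].
  by apply/eqP; congr f; apply: val_inj; rewrite /= !sgE.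
have hadj_yz : forall y z (a b : 'I_m), sg y != sg z -> Hadj (y, a) (z, b).
  move=> y z a b ne; rewrite /Hadj /=.
  have -> : y != z by apply: contraNneq ne => ->.
  case: ifP => // /and4P [_ /eqP h _ _].
  by exfalso; move/eqP: ne; apply; apply: val_inj; rewrite /= !sgE h.
pose Gk (k : 'I_r) : rel 'I_(2 ^ r).+1 := fun i j => (i != j) && (c (u i) (u j) == k).
have [k [t [w [Hcyc t3 winj]]]] : exists k t w, [/\ cyc (Gk k) t w, 3 <= t &
    forall i j, i < t -> j < t -> w i = w j -> i = j].
  apply: kp_cycle.
  - move=> k i j; rewrite /Gk eq_sym; case: eqVneq => //= ne.
    by rewrite csym // hadj_u // eq_sym.
  - by move=> k x; rewrite /Gk eqxx.
  - by move=> x y ne; exists (c (u x) (u y)); rewrite /Gk ne eqxx.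
  - by rewrite card_ord.
have tP : t <= (2 ^ r).+1.
  have := @leq_card _ _ (fun i : 'I_t => w i); rewrite !card_ord; apply.
  by move=> [i hi] [j hj] /= h; apply: val_inj; apply: winj.
have [j [hj hsj]] : exists j, j < t /\ sg (w j) != sg (w j.+1).
  case: (boolP [exists j : 'I_t, sg (w j) != sg (w j.+1)]).
    by case/existsP => [[j hj]] /= h; exists j.
  rewrite negb_exists => /forallP H.
  have e0 := H (Ordinal (leq_trans (isT : 0 < 3) t3)).
  have e1 := H (Ordinal (leq_trans (isT : 1 < 3) t3)).
  simpl in e0, e1.
  have d : forall a b, a < 3 -> b < 3 -> a != b -> (w a : nat) != w b.
    move=> a b ha hb ne; apply/negP => /eqP /val_inj /winj.
    move/(_ (leq_trans ha t3) (leq_trans hb t3)) => e; by rewrite e eqxx in ne.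
  have := d 0 1 isT isT isT; have := d 0 2 isT isT isT; have := d 1 2 isT isT isT.
  have h01 : (w 0 : nat)./2 = (w 1)./2 by rewrite -!sgE (eqP (negPn e0)).
  have h12 : (w 1 : nat)./2 = (w 2)./2 by rewrite -!sgE (eqP (negPn e1)).
  move: h01 h12 (odd_double_half (w 0)) (odd_double_half (w 1)) (odd_double_half (w 2)).
  case: (odd (w 0)); case: (odd (w 1)); case: (odd (w 2)) => /=; lia.
have [HcW WinjW] := rot_cyc j.+1 Hcyc winj.
set W := fun i => w ((i + j.+1) %% t) in HcW WinjW.
have Wt1 : W t.-1 = w j.
  rewrite /W; have -> : t.-1 + j.+1 = j + t by lia.
  by rewrite modnDr modn_small.
have W0 : W 0 = w j.+1.
  rewrite /W add0n; case: (ltngtP j.+1 t) => h; first by rewrite modn_small.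
    lia.
  by rewrite h modnn; case: Hcyc => _ ->.
set y := W 0; set z := W t.-1.
have hyz : sg y != sg z by rewrite /y /z W0 Wt1 eq_sym.
have czy : c (u z) (u y) = k.
  case: HcW => _ HW HeW.
  have ht : t.-1 < t by lia.
  have := HeW _ ht; rewrite prednK; last lia.
  by rewrite HW => /andP [_ /eqP].
have yz : y != z by apply: contraNneq hyz => ->.
have cyz : c (u y) (u z) = k by rewrite (csym _ _ (hadj_u _ _ yz)).
pose E (x x' : Hvert m r) := Hadj x x' && (c x x' == k).
have EYZ : forall a b, a \in S (sg y) -> b \in S (sg z) ->
    E (y, a) (z, b) && E (z, b) (y, a).
  move=> a b ha hb.
  rewrite /E hadj_yz // hadj_yz 1?eq_sym // canon // canon 1?eq_sym //.
  by rewrite cyz czy !eqxx.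
have ot : odd t by case: Hcyc.
have [q hq] : exists q, l = t + q.*2.
  exists ((l - t)./2); have := odd_double_half (l - t).
  rewrite oddB ?ol ?ot /=; lia.
have fresh : forall s, exists X : nat -> 'I_m, forall d d', d < q -> d' < q ->
    [/\ X d \in S s, X d != f s & (X d = X d' -> d = d')].
  move=> s; pose Xs := enum (S s :\ f s).
  have hsz : q < size Xs.
    rewrite -cardE; have := cardsD1 (f s) (S s); rewrite fS => e.
    have := Ssz s; rewrite e; lia.
  exists (fun d => nth (f s) Xs d) => d d' hd hd'.
  have hd2 : d < size Xs by lia.
  have := mem_nth (f s) hd2; rewrite mem_enum in_setD1 => /andP [-> ->].
  split => // /eqP; rewrite nth_uniq ?enum_uniq //; first by move/eqP.
  exact: ltn_trans hd' hsz.
have [A HA] := fresh (sg y).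
have [B HB] := fresh (sg z).
pose V (i : nat) : Hvert m r := if i < t then u (W i) else
  if odd (i - t) then (z, B ((i - t)./2)) else (y, A ((i - t)./2)).
have Hu : forall i, i.+1 < t -> E (u (W i)) (u (W i.+1)).
  move=> i hi; case: HcW => _ _ /(_ i (ltnW hi)) /andP [ne ce].
  by rewrite /E hadj_u.
have Ezy : E (u z) (u y) by rewrite /E hadj_u 1?eq_sym // czy eqxx.
have half_lt : forall i, i < l -> t <= i -> (i - t)./2 < q by move=> i ? ?; lia.
exists k, (fun i : 'I_l => V i); split.
- move=> [i hi] [i' hi'] /= e; apply: val_inj => /=.
  have mixed : forall a b, a < t -> t <= b -> b < l -> V a <> V b.
    move=> a b ha hb hbl; rewrite /V ha ltnNge hb /=.
    have hd := half_lt b hbl hb.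
    case: (odd (b - t)) => -[e1 e2].
    + have [_ nB _] := HB _ _ hd hd.
      by move: nB; rewrite -e2 e1 eqxx.
    + have [_ nA _] := HA _ _ hd hd.
      by move: nA; rewrite -e2 e1 eqxx.
  case: (ltnP i t) => hit; case: (ltnP i' t) => hit'.
  + apply: WinjW => //.
    by move: e; rewrite /V hit hit' => -[].
  + by case: (mixed _ _ hit hit' hi').
  + by case: (mixed _ _ hit' hit hi (esym e)).
  + move: e; rewrite /V ltnNge hit ltnNge hit' /=.
    have hd := half_lt _ hi hit; have hd' := half_lt _ hi' hit'.
    have := odd_double_half (i - t); have := odd_double_half (i' - t).
    case: (odd (i - t)); case: (odd (i' - t)) => /= o1 o2 /pair_equal_spec [e1 e2].
    * have [_ _ inj] := HB _ _ hd hd'.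
      have := inj e2; lia.
    * by move: yz; rewrite e1 eqxx.
    * by move: yz; rewrite e1 eqxx.
    * have [_ _ inj] := HA _ _ hd hd'.
      have := inj e2; lia.
- move=> [i hi] /=.
  suff: E (V i) (V (i.+1 %% l)) by case/andP => -> /eqP.
  case: (ltnP i.+1 t) => h1.
    rewrite modn_small; last lia.
    by rewrite /V (ltnW h1) h1; apply: Hu.
  case: (eqVneq i.+1 l) => hl.
    rewrite hl modnn /V (leq_trans (isT : 0 < 3) t3).
    case: (ltnP i t) => hit.
      have -> : i = t.-1 by lia.
      exact: Ezy.
    have ho : odd (i - t).
      have -> : i - t = (q.-1).*2.+1 by lia.
      by rewrite /= odd_double.
    rewrite ho.
    have hd := half_lt _ hi hit.
    have [hB _ _] := HB _ _ hd hd.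
    by case/andP: (EYZ _ _ (fS (sg y)) hB).
  have hil : i.+1 < l by rewrite ltn_neqAle hl.
  rewrite modn_small //.
  case: (eqVneq i.+1 t) => ht.
    have hq0 : 0 < q by lia.
    rewrite /V ht ltnn subnn /=.
    rewrite leqnn.
    have -> : i = t.-1 by lia.
    have [hA _ _] := HA 0 0 hq0 hq0.
    by case/andP: (EYZ _ _ hA (fS (sg z))).
  have hit : t <= i by lia.
  rewrite /V ltnNge hit /= ltnNge (leqW hit) /= subSn //.
  have hd := half_lt _ hi hit.
  have hd' : (i - t).+1./2 < q by lia.
  case: (boolP (odd (i - t))) => o; rewrite oddS o.
  + have [hB _ _] := HB _ _ hd hd; have [hA _ _] := HA _ _ hd' hd'.
    by case/andP: (EYZ _ _ hA hB) => _ H; exact: H.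
  + have [hA _ _] := HA _ _ hd hd; have [hB _ _] := HB _ _ hd' hd'.
    by case/andP: (EYZ _ _ hA hB) => H _; exact: H.
Qed.
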